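(* With $V$ satisfying (C1)–(C4), $\mathbb P(A):=V_A(1_\Omega)$, and $u^+$ as defined in the context, the map $T_{u^+}(f):=\int_\Omega u^+(\omega,f(\omega))\,\mathbb P(d\omega)$ is well defined and finite on $\mathcal L^\infty(\Omega,\mathcal F)$, monotone with respect to the pointwise order, pointwise continuous (if $(f_n)$ is uniformly bounded and $f_n\to f$ pointwise everywhere then $T_{u^+}(f_n)\to T_{u^+}(f)$), and satisfies $V_A(f)=T_{u^+}(f1_A)$ for every $f\in\mathcal L^\infty(\Omega,\mathcal F)$ and $A\in\mathcal F$.
   Context: $\mathcal L^\infty(\Omega,\mathcal F)$: bounded $\mathcal F$-measurable real functions; $V:\mathcal F\times\mathcal L^\infty(\Omega,\mathcal F)\to\mathbb R$, $(A,f)\mapsto V_A(f)$, with: (C1) for every $f$, $A\mapsto V_A(f)$ is a finite signed measure, $V_A(0)=0$, and $A\mapsto V_A(1_\Omega)$ is a probability measure; (C2) $V_A(f)=V_\Omega(f1_A)$; (C3) $f\le g$ pointwise implies $V_A(f)\le V_A(g)$, and $\mathbb P(A)>0$ implies $V_A(x)<V_A(y)$ for real $x<y$; (C4) $V_A(f_n)\to V_A(f)$ whenever $(f_n)$ is uniformly bounded and converges pointwise everywhere to $f$. For $q\in\mathbb Q$, $u(\cdot,q)$ is a version of $d\mu_q/d\mathbb P$, $\mu_q(A):=V_A(q)$, with $u(\cdot,0)\equiv0$. $\Theta:=\{\omega: u(\omega,q_1)<u(\omega,q_2)\ \forall q_1<q_2\in\mathbb Q\}\cap\{\omega: u(\omega,q)=\inf_{\tilde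 q\in\mathbb Q,\tilde q>q}u(\omega,\tilde q)\ \forall q\in\mathbb Q\}$, and $u^+(\omega,x):=\inf_{q\in\mathbb Q,q\ge x}\{u(\omega,q)1_\Theta(\omega)+x1_{\Omega\setminus\Theta}(\omega)\}$. *)

(* Defs.v *)
From HB Require Import structures.
From mathcomp Require Import all_boot all_order all_algebra.
From mathcomp Require Import all_classical all_reals all_analysis.
Set Implicit Arguments. Unset Strict Implicit. Unset Printing Implicit Defensive.
Import Order.TTheory GRing.Theory Num.Theory.
Import numFieldNormedType.Exports.
Local Open Scope classical_set_scope.
Local Open Scope ring_scope.

Section Defs.
Context {d : measure_display} {T : measurableType d} {R : realType}.

Definition Linf (f : T -> R) : Prop :=
  measurable_fun setT f /\ exists M : R, forall x, `|f x| <= M.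

Definition Theta (u : T -> rat -> R) : set T :=
  [set w | (forall q1 q2 : rat, q1 < q2 -> u w q1 < u w q2) /\
           (forall q : rat, u w q = inf [set u w q' | q' in [set q' : rat | q < q']])].

Definition uplus (u : T -> rat -> R) (w : T) (x : R) : R :=
  inf [set u w q * \1_(Theta u) w + x * \1_(~` Theta u) w
       | q in [set q : rat | x <= ratr q]].

Definition Tu (P : probability T R) (u : T -> rat -> R) (f : T -> R) : R :=
  fine (\int[P]_w (uplus u w (f w))%:E).

End Defs.

(* Main.v *)
Require Import Defs.
From HB Require Import structures.
From mathcomp Require Import all_boot all_order all_algebra.
From mathcomp Require Import all_classical all_reals all_analysis.
From mathcomp Require Import measurable_realfun.
From mathcomp Require Import zify lra.
Import Order.TTheory GRing.Theory Num.Theory.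
Import numFieldNormedType.Exports.
Local Open Scope classical_set_scope.
Local Open Scope ring_scope.
Set Implicit Arguments. Unset Strict Implicit. Unset Printing Implicit Defensive.

Section Main.
Variables (d : measure_display) (T : measurableType d) (R : realType)
  (V : set T -> (T -> R) -> R) (P : probability T R) (u : T -> rat -> R).
Hypothesis C1_sigma : forall f, Linf f -> forall A : nat -> set T,
      (forall n, measurable (A n)) -> trivIset setT A ->
      (fun n => \sum_(i < n) V (A i) f) @ \oo --> V (\bigcup_n A n) f.
Hypothesis C1_empty : forall f, Linf f -> V set0 f = 0.
Hypothesis C1_prob_nonneg : forall A, measurable A -> 0 <= V A (fun _ => 1).
Hypothesis HP : forall A, measurable A -> P A = (V A (fun _ => 1))%:E.
Hypothesis C2 : forall A f, measurable A -> Linf f ->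
      V A f = V setT (fun w => f w * \1_A w).
Hypothesis C3_mono : forall A f g, measurable A -> Linf f -> Linf g ->
      (forall w, f w <= g w) -> V A f <= V A g.
Hypothesis C3_strict : forall A (x y : R), measurable A -> (0 < P A)%E -> x < y ->
      V A (fun _ => x) < V A (fun _ => y).
Hypothesis C4 : forall A (fn : nat -> T -> R) (f : T -> R), measurable A ->
      (forall n, Linf (fn n)) -> Linf f ->
      (exists M : R, forall n w, `|fn n w| <= M) ->
      (forall w, (fun n => fn n w) @ \oo --> f w) ->
      (fun n => V A (fn n)) @ \oo --> V A f.
Hypothesis Hu_meas : forall q : rat, measurable_fun setT (fun w => u w q).
Hypothesis Hu_int : forall q : rat, P.-integrable setT (fun w => (u w q)%:E).
Hypothesis Hu_RN : forall (q : rat) A, measurable A ->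
      (V A (fun _ => ratr q))%:E = (\int[P]_(w in A) (u w q)%:E)%E.
Lemma Linf_cst (c : R) : @Linf d T R (fun _ : T => c).
Proof. by split; [exact: measurable_cst | exists `|c|]. Qed.

Lemma Linf_ind f A : Linf f -> measurable A -> @Linf d T R (fun w => f w * \1_A w).
Proof.
move=> [mf [M hM]] mA; split.
  by apply: measurable_funM => //; exact: measurable_indic.
exists M => x; rewrite normrM; apply: le_trans (hM x).
rewrite indicE; case: (x \in A); rewrite ?normr1 ?normr0 ?mulr1 ?mulr0 //.
Qed.

Lemma V_split A B f : measurable A -> measurable B -> A `&` B = set0 -> Linf f ->
  V (A `|` B) f = V A f + V B f.
Proof.
move=> mA mB AB0 lf.
pose F := bigcup2 A B.
have mF n : measurable (F n).
  by rewrite /F /bigcup2; case: ifP => // _; case: ifP.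
have tF : trivIset setT F by rewrite -trivIset_bigcup2.
have H1 := C1_sigma lf mF tF; rewrite bigcup2E in H1.
have H2 : (fun n => \sum_(i < n) V (F i) f) @ \oo --> V A f + V B f.
  apply: cvg_near_cst; near=> n.
  have n2 : (2 <= n)%N by near: n; exists 2%N.
  rewrite -(subnKC n2) big_split_ord /= !big_ord_recl big_ord0 /= addr0.
  rewrite big1 ?addr0 //= => i _; rewrite /F /bigcup2 /=.
  by rewrite C1_empty.
exact: (cvg_unique _ H1 H2).
Unshelve. all: by end_near.
Qed.
Lemma meas_le (f g : T -> R) : measurable_fun setT f -> measurable_fun setT g ->
  measurable [set w | f w <= g w].
Proof.
move=> mf mg; have := measurable_fun_ler mf mg measurableT (_ : measurable [set true]).
rewrite setTI; apply => //.
Qed.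

Lemma meas_lt (f g : T -> R) : measurable_fun setT f -> measurable_fun setT g ->
  measurable [set w | f w < g w].
Proof.
move=> mf mg; have := measurable_fun_ltr mf mg measurableT (_ : measurable [set true]).
rewrite setTI; apply => //.
Qed.
Definition Nmono (q1 q2 : rat) : set T :=
  if q1 < q2 then [set w | u w q2 <= u w q1] else set0.

Lemma mNmono q1 q2 : measurable (Nmono q1 q2).
Proof. by rewrite /Nmono; case: ifP => // _; exact: meas_le. Qed.

Lemma intS q A : measurable A -> P.-integrable A (fun w => (u w q)%:E).
Proof. by move=> mA; apply: integrableS (Hu_int q). Qed.

Lemma Nmono0 q1 q2 : P (Nmono q1 q2) = 0%E.
Proof.
have := mNmono q1 q2; rewrite /Nmono; case: ifPn => [lt|_ _]; last exact: measure0.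
set B := [set w | _] => mB.
have := measure_ge0 P B; rewrite le_eqVlt => /orP[/eqP <-//|PBpos].
exfalso.
have := C3_strict mB PBpos (_ : ratr q1 < ratr q2).
rewrite ltr_rat => /(_ lt).
have : V B (fun=> ratr q2) <= V B (fun=> ratr q1).
  rewrite -lee_fin !Hu_RN //; apply: le_integral => //; try exact: intS.
  by move=> x; rewrite inE /B /= lee_fin.
by rewrite leNgt => /negP.
Qed.
Definition Nrc (q : rat) (k : nat) : set T :=
  \bigcap_(q' in [set q' : rat | q < q']) [set w | u w q + k.+1%:R^-1 <= u w q'].

Lemma mNrc q k : measurable (Nrc q k).
Proof.
rewrite /Nrc -[X in measurable X]setCK setC_bigcap; apply: measurableC.
rewrite bigcup_mkcond; apply: bigcupT_measurable_rat => q'.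
case: ifP => // _; apply: measurableC; apply: meas_le.
  exact: measurable_funD.
exact: Hu_meas.
Qed.

Lemma Linf_bcst (c : R) : @Linf d T R (fun _ : T => c).
Proof. by split; [exact: measurable_cst | exists `|c|]. Qed.

Lemma Nrc0 q k : P (Nrc q k) = 0%E.
Proof.
have mB := mNrc q k; set B := Nrc q k in mB *.
set c : R := k.+1%:R^-1.
have c0 : 0 < c by rewrite invr_gt0.
pose pB := V B (fun=> 1).
pose qn (n : nat) : rat := q + n.+1%:R^-1.
have key n : V B (fun=> ratr q) + c * pB <= V B (fun=> ratr (qn n)).
  rewrite -lee_fin EFinD EFinM /pB -HP // !Hu_RN //.
  have -> : (\int[P]_(w in B) (u w q)%:E + c%:E * P B =
             \int[P]_(w in B) ((u w q)%:E + c%:E))%E.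
    rewrite integralD //; [by rewrite integral_cst | exact: intS |].
    exact: finite_measure_integrable_cst.
  apply: (le_integral mB).
  - apply: (@integrableD _ _ _ P B mB (fun w => (u w q)%:E) (EFin \o cst c)).
      exact: intS.
    exact: finite_measure_integrable_cst.
  - exact: intS.
  move=> x; rewrite inE => Bx; rewrite -EFinD lee_fin; apply: Bx.
  by rewrite /= /qn ltrDl invr_gt0.
have cv : (fun n => V B (fun=> ratr (qn n))) @ \oo --> V B (fun=> ratr q).
  apply: C4 => //; [move=> n; exact: Linf_bcst | exact: Linf_bcst | |].
    exists (`|ratr q| + 1) => n w; rewrite /qn rmorphD /=.
    apply: le_trans (ler_normD _ _) _; rewrite lerD2l fmorphV rmorph_nat.
    by rewrite ger0_norm ?invr_ge0 // invf_le1 // ler1n.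
  move=> w; rewrite /qn.
  have -> : (fun n => ratr (q + n.+1%:R^-1) : R) = (fun n => ratr q + harmonic n).
    by apply: funext => n; rewrite rmorphD /= fmorphV rmorph_nat.
  rewrite -[X in _ --> X]addr0; apply: cvgD; [exact: cvg_cst | exact: cvg_harmonic].
have key2 : \forall n \near \oo, V B (fun=> ratr q) + c * pB <= V B (fun=> ratr (qn n)).
  by apply: nearW.
have := cvgr_to_ge cv key2.
rewrite -lerBrDl subrr pmulr_rle0 // => pB0.
rewrite HP //; congr (_%:E); apply/eqP; rewrite eq_le pB0 /=.
exact: C1_prob_nonneg.
Qed.
Lemma null_bigcup_rat (F : rat -> set T) : (forall q, measurable (F q)) ->
  (forall q, P (F q) = 0%E) -> P (\bigcup_q F q) = 0%E.
Proof.
move=> mF F0.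
have -> : \bigcup_q F q = \bigcup_(n : nat) F (odflt 0 (unpickle n)).
  apply/seteqP; split => [x [q _ Fx]|x [n _ Fx]]; last by exists (odflt 0 (unpickle n)).
  by exists (pickle q) => //; rewrite pickleK.
have mU : measurable (\bigcup_(n : nat) F (odflt 0 (unpickle n))).
  by apply: bigcupT_measurable => n.
apply/(@negligibleP _ _ _ P _ mU).
by apply: negligible_bigcup => n; apply/(@negligibleP _ _ _ P _ (mF _)); exact: F0.
Qed.

Definition Nall : set T :=
  (\bigcup_q1 \bigcup_q2 Nmono q1 q2) `|` (\bigcup_q \bigcup_(k : nat) Nrc q k).

Lemma mNall : measurable Nall.
Proof.
apply: measurableU; apply: bigcupT_measurable_rat => q.
  by apply: bigcupT_measurable_rat => q2; exact: mNmono.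
by apply: bigcupT_measurable => k; exact: mNrc.
Qed.

Lemma PNall : P Nall = 0%E.
Proof.
have m1 : measurable (\bigcup_q1 \bigcup_q2 Nmono q1 q2).
  by apply: bigcupT_measurable_rat => q; apply: bigcupT_measurable_rat => q2; exact: mNmono.
have m2 : measurable (\bigcup_q \bigcup_(k : nat) Nrc q k).
  by apply: bigcupT_measurable_rat => q; apply: bigcupT_measurable => k; exact: mNrc.
apply/(@negligibleP _ _ _ P _ mNall).
apply: negligibleU; [apply/(@negligibleP _ _ _ P _ m1) | apply/(@negligibleP _ _ _ P _ m2)].
  apply: null_bigcup_rat => q.
    by apply: bigcupT_measurable_rat => q2; exact: mNmono.
  by apply: null_bigcup_rat => q2; [exact: mNmono | exact: Nmono0].
apply: null_bigcup_rat => q; first by apply: bigcupT_measurable => k; exact: mNrc.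
have mU : measurable (\bigcup_(k : nat) Nrc q k) by apply: bigcupT_measurable => k; exact: mNrc.
apply/(@negligibleP _ _ _ P _ mU).
by apply: negligible_bigcup => k; apply/(@negligibleP _ _ _ P _ (mNrc q k)); exact: Nrc0.
Qed.

Lemma small_inv (e : R) : 0 < e -> exists k : nat, k.+1%:R^-1 < e.
Proof.
move=> e0; exists (Num.bound e^-1).
have ei : 0 <= e^-1 by rewrite invr_ge0 ltW.
have := archi_boundP ei.
move=> h; rewrite -[X in _ < X](invrK e) ltf_pV2 ?posrE ?invr_gt0 ?ltr0Sn //.
apply: lt_le_trans h _; rewrite ler_nat; exact: leqnSn.
Qed.

Lemma ThE : Theta u = ~` Nall.
Proof.
apply/seteqP; split => w.
  move=> [smono rc] [[q1 _ [q2 _]]|[q _ [k _]]].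
    rewrite /Nmono; case: ifP => // lt12 /=.
    by rewrite leNgt smono.
  set c : R := k.+1%:R^-1 => Nr.
  have hS : has_inf [set u w q' | q' in [set q' : rat | q < q']].
    split; first by exists (u w (q + 1)); exists (q + 1) => //=; rewrite ltrDl.
    by exists (u w q) => _ [q' /= qq' <-]; exact/ltW/smono.
  have c0 : 0 < c by rewrite invr_gt0.
  have [_ [q' /= qq' <-] H] := inf_adherent c0 hS.
  rewrite -rc in H; have := Nr q' qq'; by rewrite /= leNgt H.
move=> nN.
have smono : forall q1 q2 : rat, q1 < q2 -> u w q1 < u w q2.
  move=> q1 q2 lt12; rewrite ltNge; apply/negP => H; apply: nN; left.
  by exists q1 => //; exists q2 => //; rewrite /Nmono lt12.
split => // q.
have ne : [set u w q' | q' in [set q' : rat | q < q']] !=set0.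
  by exists (u w (q + 1)); exists (q + 1) => //=; rewrite ltrDl.
have lb : lbound [set u w q' | q' in [set q' : rat | q < q']] (u w q).
  by move=> _ [q' /= qq' <-]; exact/ltW/smono.
apply/eqP; rewrite eq_le; apply/andP; split; first exact: lb_le_inf.
apply/ler_addgt0Pr => e e0.
have [k ke] := small_inv e0.
have [q' [qq' H]] : exists q', q < q' /\ u w q' < u w q + k.+1%:R^-1.
  apply: contrapT => H; apply: nN; right; exists q => //; exists k => // q' /= qq'.
  rewrite leNgt; apply/negP => H'; apply: H; by exists q'.
apply: le_trans (_ : u w q' <= _).
  by apply: ge_inf; [exists (u w q) | exists q'].
by apply: le_trans (ltW H) _; rewrite lerD2l ltW.
Qed.

Lemma mTh : measurable (Theta u).
Proof. by rewrite ThE; apply: measurableC; exact: mNall. Qed.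

Lemma PnTh : P (~` Theta u) = 0%E.
Proof. by rewrite ThE setCK PNall. Qed.
Definition Sx (w : T) (x : R) := [set u w q | q in [set q : rat | x <= ratr q]].

Lemma rat_ge (x : R) : exists q : rat, x <= ratr q.
Proof. by exists (Num.ceil x)%:~R; rewrite ratr_int ceil_ge. Qed.

Lemma rat_le (x : R) : exists q : rat, ratr q <= x.
Proof. by exists (Num.floor x)%:~R; rewrite ratr_int; case/andP: (floor_itv x). Qed.

Lemma uplusT w x : Theta u w -> uplus u w x = inf (Sx w x).
Proof.
move=> Tw; rewrite /uplus !indicE mem_set // memNset; last by move/(_ Tw).
by rewrite /Sx; congr inf; apply/seteqP; split => _ [q qx <-]; exists q => //=;
  rewrite mulr1 mulr0 addr0.
Qed.

Lemma uplusNT w x : ~ Theta u w -> uplus u w x = x.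
Proof.
move=> Tw; rewrite /uplus !indicE memNset // mem_set //.
have [q0 q0x] := rat_ge x.
rewrite -[RHS]inf1; congr inf; apply/seteqP; split.
  by move=> _ [q qx <-]; rewrite /= mulr0 add0r mulr1.
by move=> _ ->; exists q0 => //=; rewrite mulr0 add0r mulr1.
Qed.

Lemma Thmono w q1 q2 : Theta u w -> q1 <= q2 -> u w q1 <= u w q2.
Proof.
move=> [sm _]; rewrite le_eqVlt => /orP[/eqP -> //|/sm/ltW //].
Qed.

Lemma hasinfS w x : Theta u w -> has_inf (Sx w x).
Proof.
move=> Tw; split.
  by have [q qx] := rat_ge x; exists (u w q); exists q.
have [q0 q0x] := rat_le x; exists (u w q0) => _ [q /= qx <-].
by apply: Thmono => //; rewrite -(ler_rat R) (le_trans q0x qx).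
Qed.

Lemma uplus_bnd w x a b : Theta u w -> ratr a <= x -> x <= ratr b ->
  u w a <= uplus u w x <= u w b.
Proof.
move=> Tw ax xb; rewrite uplusT //; apply/andP; split.
  apply: lb_le_inf; first by exists (u w b); exists b.
  move=> _ [q /= qx <-]; apply: Thmono => //.
  by rewrite -(ler_rat R) (le_trans ax qx).
by apply: ge_inf; [case: (hasinfS x Tw) | exists b].
Qed.

Lemma uplus_rat w q : Theta u w -> uplus u w (ratr q) = u w q.
Proof.
by move=> Tw; apply/eqP; rewrite eq_le andbC; apply: uplus_bnd.
Qed.

Lemma uplus_mono w x y : Theta u w -> x <= y -> uplus u w x <= uplus u w y.
Proof.
move=> Tw xy; rewrite !uplusT //; apply: lb_le_inf; first by case: (hasinfS y Tw).
move=> _ [q /= yq <-]; apply: ge_inf; first by case: (hasinfS x Tw).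
by exists q => //=; exact: le_trans yq.
Qed.

Lemma uplus_rc w x e : Theta u w -> 0 < e -> exists2 del, 0 < del &
  forall y, x <= y -> y < x + del -> uplus u w y < uplus u w x + e.
Proof.
move=> Tw e0.
have [_ [q /= xq <-] H] := inf_adherent e0 (hasinfS x Tw).
rewrite -uplusT // in H.
have key : forall q' : rat, x < ratr q' -> u w q' < uplus u w x + e ->
  exists2 del, 0 < del &
  forall y, x <= y -> y < x + del -> uplus u w y < uplus u w x + e.
  move=> q' xq' H'; exists (ratr q' - x); first by rewrite subr_gt0.
  move=> y xy; rewrite addrC subrK => yq'.
  apply: le_lt_trans H'; rewrite uplusT //; apply: ge_inf.
    by case: (hasinfS y Tw).
  by exists q' => //=; exact: ltW.
move: xq; rewrite le_eqVlt => /orP[/eqP xq|xq]; last exact: key H.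
have [sm rc] := Tw.
have hS : has_inf [set u w q' | q' in [set q' : rat | q < q']].
  split; first by exists (u w (q + 1)); exists (q + 1) => //=; rewrite ltrDl.
  by exists (u w q) => _ [q' /= qq' <-]; exact/ltW/sm.
have [_ [q' /= qq' <-] H'] := inf_adherent e0 hS.
rewrite -rc in H'.
apply: (key q'); first by rewrite xq ltr_rat.
by rewrite xq uplus_rat.
Qed.
Lemma ThP w : Theta u w <-> ~ Nall w.
Proof. by rewrite ThE. Qed.

Lemma muplus (g : T -> R) : measurable_fun setT g ->
  measurable_fun setT (fun w => uplus u w (g w)).
Proof.
move=> mg mD; apply: (measurability _ (RGenInftyO.measurableE R)) => //.
move=> _ [_ [c ->] <-].
have -> : setT `&` (fun w => uplus u w (g w)) @^-1` `]-oo, c[ =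
  (Nall `&` [set w | g w < c]) `|`
  (~` Nall `&` \bigcup_(q : rat) ([set w | g w <= ratr q] `&` [set w | u w q < c])).
  apply/seteqP; split => w /=.
    rewrite in_itv /= => -[_ H].
    case: (pselect (Theta u w)) => Tw.
      rewrite uplusT // in H.
      have [_ [q /= gq <-] ucq] := inf_lt (proj1 (hasinfS (g w) Tw)) H.
      by right; split; [exact/ThP | exists q].
    rewrite uplusNT // in H; left; split => //.
    by apply: contrapT => nN; apply: Tw; apply/ThP.
  move=> [[Nw gc]|[nN [q _ [gq uq]]]]; split => //; rewrite in_itv /=.
    rewrite uplusNT //; by move/ThP.
  have Tw : Theta u w by apply/ThP.
  rewrite uplusT //; apply: le_lt_trans uq; apply: ge_inf.
    by case: (hasinfS (g w) Tw).
  by exists q.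
apply: measurableU; apply: measurableI.
- exact: mNall.
- by apply: meas_lt => //; exact: measurable_cst.
- exact/measurableC/mNall.
- apply: bigcupT_measurable_rat => q; apply: measurableI.
    by apply: meas_le => //; exact: measurable_cst.
  by apply: meas_lt => //; exact: measurable_cst.
Qed.
Definition Gdom (N : rat) (w : T) : R := `|u w (- N)| + `|u w N| + ratr N.

Lemma int_Gdom N : P.-integrable setT (fun w => (Gdom N w)%:E).
Proof.
apply: (@integrableD _ _ _ P setT measurableT
  (fun w => (`|u w (- N)| + `|u w N|)%:E) (EFin \o cst (ratr N))); last first.
  exact: finite_measure_integrable_cst.
apply: (@integrableD _ _ _ P setT measurableT
  (EFin \o (Num.norm \o (fun w => u w (- N)))) (EFin \o (Num.norm \o (fun w => u w N)))).
  exact: integrable_norm (Hu_int (- N)).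
exact: integrable_norm (Hu_int N).
Qed.

Lemma bnd_uplus (g : T -> R) (N : rat) w : `|g w| <= ratr N ->
  `|uplus u w (g w)| <= Gdom N w.
Proof.
move=> gN; have N0 : 0 <= ratr N :> R by apply: le_trans gN.
have a0 := normr_ge0 (u w (- N)); have b0 := normr_ge0 (u w N).
rewrite /Gdom; case: (pselect (Theta u w)) => Tw; last first.
  by rewrite uplusNT //; apply: le_trans gN _; rewrite lerDr.
move: gN; rewrite ler_norml => /andP[lg ug].
have lg' : ratr (- N) <= g w by rewrite rmorphN.
have /andP[l r] := uplus_bnd Tw lg' ug.
have h1 := ler_norm (u w N).
have h2 := ler_norm (- u w (- N)); rewrite normrN in h2.
rewrite ler_norml; apply/andP; split; lra.
Qed.
Lemma Gdom_ge0 N w : (0 : R) <= ratr N -> 0 <= Gdom N w.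
Proof. by move=> N0; rewrite /Gdom !addr_ge0. Qed.

Lemma int_uplus g : Linf g -> P.-integrable setT (fun w => (uplus u w (g w))%:E).
Proof.
move=> [mg [M hM]]; have [N hN] := rat_ge `|M|.
have gN w : `|g w| <= ratr N by apply: le_trans (hM w) (le_trans (ler_norm M) hN).
have N0 : (0 : R) <= ratr N := le_trans (normr_ge0 M) hN.
apply: (le_integrable measurableT _ _ (int_Gdom N)).
  exact/measurable_EFinP/muplus.
move=> w _ /=; rewrite lee_fin (ger0_norm (Gdom_ge0 w N0)).
exact: bnd_uplus.
Qed.
Lemma int_eqTh A (f g : T -> \bar R) : measurable A -> measurable_fun A f ->
  measurable_fun A g -> (forall w, A w -> Theta u w -> f w = g w) ->
  (\int[P]_(w in A) f w = \int[P]_(w in A) g w)%E.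
Proof.
move=> mA mf mg fg; apply: ae_eq_integral => //.
exists Nall; split; [exact: mNall | exact: PNall |].
move=> w /= H; apply: contrapT => nN; apply: H => Aw; apply: fg => //.
exact/ThP.
Qed.

Lemma SL (s : seq rat) : forall A g, measurable A -> Linf g ->
  (forall w, A w -> exists2 q, q \in s & g w = ratr q) ->
  (V A g)%:E = (\int[P]_(w in A) (uplus u w (g w))%:E)%E.
Proof.
have mU g : Linf g -> measurable_fun setT (fun w => (uplus u w (g w))%:E).
  by move=> [mg _]; apply/measurable_EFinP/muplus.
elim: s => [|q s IH] A g mA lg hg.
  have A0 : A = set0 by apply/seteqP; split => // w /hg [q]; rewrite in_nil.
  by subst; rewrite C1_empty // integral_set0.
have mg := proj1 lg.
set E := [set w | g w = ratr q].
have mE : measurable E.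
  have := mg measurableT [set ratr q] (measurable_set1 _); by rewrite setTI.
set B := A `&` E; set C := A `&` ~` E.
have mB : measurable B by exact: measurableI.
have mC : measurable C by apply: measurableI => //; exact: measurableC.
have AE : A = B `|` C by rewrite -setIUr setUCr setIT.
have BC : B `&` C = set0 by rewrite setIACA setICr setI0.
rewrite AE V_split // EFinD.
have -> : (V C g)%:E = (\int[P]_(w in C) (uplus u w (g w))%:E)%E.
  apply: IH => // w [Aw nEw]; have [q' q's gq'] := hg w Aw.
  exists q' => //; move: q's; rewrite in_cons => /orP[/eqP qq|//].
  by exfalso; apply: nEw; rewrite /E /= gq' qq.
have -> : V B g = V B (fun=> ratr q).
  rewrite C2 // [RHS]C2 //; last exact: Linf_bcst.
  congr (V setT _); apply: funext => w; rewrite indicE.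
  case: (boolP (w \in B)) => [/set_mem [_ Ew]|_]; last by rewrite !mulr0.
  by rewrite Ew.
rewrite Hu_RN //.
rewrite (@int_eqTh B (fun w => (u w q)%:E) (fun w => (uplus u w (g w))%:E)) //.
- rewrite -integral_setU //.
  + exact: measurable_funS (mU g lg).
  + by rewrite /disj_set BC.
- by apply/measurable_EFinP; apply: measurable_funS (Hu_meas q).
- exact: measurable_funS (mU g lg).
by move=> w [_ Ew] Tw; rewrite Ew uplus_rat.
Qed.
Lemma ev_inv (e : R) : 0 < e -> \forall n \near \oo, n.+1%:R^-1 < e.
Proof.
move=> e0; have [k ke] := small_inv e0.
exists k => // n /= kn; apply: le_lt_trans ke.
by rewrite lef_pV2 ?posrE ?ltr0Sn // ler_nat ltnS.
Qed.

Lemma cvg_sq (a : nat -> R) (x : R) :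
  (forall n, x <= a n <= x + n.+1%:R^-1) -> a @ \oo --> x.
Proof.
move=> ha; apply/cvgrPdist_lt => e e0; near=> n.
have /andP[h1 h2] := ha n.
rewrite distrC ger0_norm ?subr_ge0 //.
apply: (@le_lt_trans _ _ (n.+1%:R^-1)).
  by move: h2; set t := n.+1%:R^-1; move=> h2; lra.
near: n; exact: ev_inv.
Unshelve. all: by end_near.
Qed.

Definition gn (g : T -> R) (n : nat) (w : T) : R :=
  (Num.ceil (g w * n.+1%:R))%:~R / n.+1%:R.

Lemma gn_bnd g n w : g w <= gn g n w <= g w + n.+1%:R^-1.
Proof.
have k0 : (0 : R) < n.+1%:R by rewrite ltr0Sn.
rewrite /gn; apply/andP; split.
  by rewrite ler_pdivlMr // ceil_ge.
rewrite ler_pdivrMr // mulrDl mulVf ?gt_eqF //.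
have := ceilB1_lt (g w * n.+1%:R); rewrite intrB /=; lra.
Qed.

Lemma mceil : measurable_fun setT (fun x : R => ((Num.ceil x)%:~R : R)).
Proof.
apply: nondecreasing_measurable => // x y xy.
by rewrite ler_int le_ceil.
Qed.

Lemma Linf_gn g n : Linf g -> Linf (gn g n).
Proof.
move=> [mg [M hM]]; split.
  apply: measurable_funM; last exact: measurable_cst.
  apply: measurableT_comp mceil _.
  by apply: measurable_funM => //; exact: measurable_cst.
exists (`|M| + 1) => w; have /andP[h1 h2] := gn_bnd g n w.
have := hM w; rewrite ler_norml => /andP[l1 l2].
have hk : n.+1%:R^-1 <= (1 : R) by rewrite invf_le1 ?ler1n ?ltr0Sn.
have hM' := ler_norm M.
rewrite ler_norml; move: h2 hk; set t := n.+1%:R^-1 => h2 hk; apply/andP; split; lra.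
Qed.
Lemma gn_list g n (M : R) : (forall w, `|g w| <= M) ->
  exists s : seq rat, forall w, exists2 q, q \in s & gn g n w = ratr q.
Proof.
move=> hM.
have k0 : (0 : R) <= n.+1%:R by rewrite ler0n.
set c := Num.ceil (`|M| * n.+1%:R).
set K := absz c.
exists [seq (((i%:Z - K%:Z)%:~R / n.+1%:R) : rat) | i <- iota 0 (K + K).+1].
move=> w; set z := Num.ceil (g w * n.+1%:R).
have gM : `|g w| <= `|M| := le_trans (hM w) (ler_norm M).
move: gM; rewrite ler_norml => /andP[gl gu].
have zu : z <= c by apply: le_ceil; rewrite ler_wpM2r.
have zl : - c <= z.
  rewrite -(ler_int R) intrN; apply: le_trans (ceil_ge _).
  apply: le_trans (_ : - (`|M| * n.+1%:R) <= _).
    by rewrite lerN2 ceil_ge.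
  by rewrite -mulNr ler_wpM2r.
have zl' : - K%:Z <= z by rewrite /K; lia.
have zu' : z <= K%:Z by rewrite /K; lia.
exists ((z%:~R / n.+1%:R) : rat).
  apply/mapP; exists (absz (z + K%:Z)); first by rewrite mem_iota; lia.
  by congr (_%:~R / _); lia.
by rewrite /gn fmorph_div rmorph_int rmorph_nat.
Qed.
Lemma cvg_gn g w : (fun n => gn g n w) @ \oo --> g w.
Proof. by apply: cvg_sq => n; exact: gn_bnd. Qed.

Lemma cvg_uplus g w :
  (fun n => uplus u w (gn g n w)) @ \oo --> uplus u w (g w).
Proof.
case: (pselect (Theta u w)) => Tw; last first.
  rewrite uplusNT //.
  have -> : (fun n => uplus u w (gn g n w)) = (fun n => gn g n w).
    by apply: funext => n; rewrite uplusNT.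
  exact: cvg_gn.
apply/cvgrPdist_lt => e e0.
have [del del0 hdel] := uplus_rc (g w) Tw e0.
near=> n; have /andP[h1 h2] := gn_bnd g n w.
have hm := uplus_mono Tw h1.
have hlt : gn g n w < g w + del.
  apply: le_lt_trans h2 _; rewrite ltrD2l; near: n; exact: ev_inv.
have := hdel _ h1 hlt.
rewrite distrC ger0_norm ?subr_ge0 //; lra.
Unshelve. all: by end_near.
Qed.

Lemma REP g : Linf g -> (V setT g)%:E = (\int[P]_w (uplus u w (g w))%:E)%E.
Proof.
move=> lg; have [mg [M hM]] := lg.
have [N hN] := rat_ge (`|M| + 1).
have gnN n w : `|gn g n w| <= ratr N.
  apply: le_trans hN; have /andP[h1 h2] := gn_bnd g n w.
  have := hM w; rewrite ler_norml => /andP[l1 l2].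
  have hk : n.+1%:R^-1 <= (1 : R) by rewrite invf_le1 ?ler1n ?ltr0Sn.
  have hM' := ler_norm M.
  move: h2 hk; set t := n.+1%:R^-1 => h2 hk.
  rewrite ler_norml; apply/andP; split; lra.
have cvV : (fun n => (V setT (gn g n))%:E) @ \oo --> (V setT g)%:E.
  apply: cvg_EFin; first exact: nearW.
  apply: (C4 measurableT) => //.
  - by move=> n; exact: Linf_gn.
  - by exists (ratr N) => n w; exact: gnN.
  - exact: cvg_gn.
have mU h : Linf h -> measurable_fun setT (fun w => (uplus u w (h w))%:E).
  by move=> [mh _]; apply/measurable_EFinP/muplus.
have cvE : forall w, [set: T] w -> (fun n => (uplus u w (gn g n w))%:E) @ \oo --> (uplus u w (g w))%:E.
  by move=> w _; apply: cvg_EFin; [exact: nearW | exact: cvg_uplus].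
have bE : forall w n, [set: T] w -> (`|(uplus u w (gn g n w))%:E| <= (Gdom N w)%:E)%E.
  by move=> w n _; rewrite /= lee_fin; exact: bnd_uplus.
have [_ _ cvI] := @dominated_convergence _ _ _ P setT measurableT
  (fun n w => (uplus u w (gn g n w))%:E) (fun w => (uplus u w (g w))%:E)
  (fun w => (Gdom N w)%:E) (fun n => mU _ (Linf_gn n lg)) (mU _ lg)
  (aeW _ cvE) (int_Gdom N) (aeW _ bE).
have eqs : (fun n => (V setT (gn g n))%:E) =
    [sequence (\int[P]_(w in setT) (uplus u w (gn g n w))%:E)%E]_n.
  apply: funext => n /=; have [s hs] := gn_list n hM.
  apply: (@SL s setT (gn g n)) => //; first exact: Linf_gn.
rewrite -eqs in cvI.
exact: (cvg_unique _ cvV cvI).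
Qed.
Lemma main_sec :
  (forall f, Linf f -> P.-integrable setT (fun w => (uplus u w (f w))%:E)) /\
  (forall f g, Linf f -> Linf g -> (forall w, f w <= g w) -> Tu P u f <= Tu P u g) /\
  (forall (fn : nat -> T -> R) (f : T -> R),
      (forall n, Linf (fn n)) -> Linf f ->
      (exists M : R, forall n w, `|fn n w| <= M) ->
      (forall w, (fun n => fn n w) @ \oo --> f w) ->
      (fun n => Tu P u (fn n)) @ \oo --> Tu P u f) /\
  (forall f A, Linf f -> measurable A -> V A f = Tu P u (fun w => f w * \1_A w)).
Proof.
have TuE g : Linf g -> Tu P u g = V setT g by move=> lg; rewrite /Tu -REP.
split; first exact: int_uplus.
split; first by move=> f g lf lg fg; rewrite !TuE //; exact: C3_mono.
split.
  move=> fn f lfn lf hb cv; rewrite TuE //.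
  have -> : (fun n => Tu P u (fn n)) = (fun n => V setT (fn n)).
    by apply: funext => n; rewrite TuE.
  exact: C4.
move=> f A lf mA; rewrite TuE; [exact: C2 | exact: Linf_ind].
Qed.
End Main.
Unset Implicit Arguments.

Theorem mainTheorem11 (d : measure_display) (T : measurableType d) (R : realType)
  (V : set T -> (T -> R) -> R) (P : probability T R) (u : T -> rat -> R)
  (* (C1) *)
  (C1_sigma : forall f, Linf f -> forall A : nat -> set T,
      (forall n, measurable (A n)) -> trivIset setT A ->
      (fun n => \sum_(i < n) V (A i) f) @ \oo --> V (\bigcup_n A n) f)
  (C1_empty : forall f, Linf f -> V set0 f = 0)
  (C1_zero : forall A, measurable A -> V A (fun _ => 0) = 0)
  (C1_prob_nonneg : forall A, measurable A -> 0 <= V A (fun _ => 1))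
  (C1_prob_total : V setT (fun _ => 1) = 1)
  (* P(A) := V_A(1_Omega) *)
  (HP : forall A, measurable A -> P A = (V A (fun _ => 1))%:E)
  (* (C2) *)
  (C2 : forall A f, measurable A -> Linf f ->
      V A f = V setT (fun w => f w * \1_A w))
  (* (C3) *)
  (C3_mono : forall A f g, measurable A -> Linf f -> Linf g ->
      (forall w, f w <= g w) -> V A f <= V A g)
  (C3_strict : forall A (x y : R), measurable A -> (0 < P A)%E -> x < y ->
      V A (fun _ => x) < V A (fun _ => y))
  (* (C4) *)
  (C4 : forall A (fn : nat -> T -> R) (f : T -> R), measurable A ->
      (forall n, Linf (fn n)) -> Linf f ->
      (exists M : R, forall n w, `|fn n w| <= M) ->
      (forall w, (fun n => fn n w) @ \oo --> f w) ->
      (fun n => V A (fn n)) @ \oo --> V A f)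
  (* u(., q) is a version of d mu_q / d P, mu_q(A) := V_A(q) *)
  (Hu_meas : forall q : rat, measurable_fun setT (fun w => u w q))
  (Hu_int : forall q : rat, P.-integrable setT (fun w => (u w q)%:E))
  (Hu_RN : forall (q : rat) A, measurable A ->
      (V A (fun _ => ratr q))%:E = (\int[P]_(w in A) (u w q)%:E)%E)
  (Hu0 : forall w, u w 0 = 0) :
  (* well defined and finite *)
  (forall f, Linf f -> P.-integrable setT (fun w => (uplus u w (f w))%:E)) /\
  (* monotone *)
  (forall f g, Linf f -> Linf g -> (forall w, f w <= g w) -> Tu P u f <= Tu P u g) /\
  (* pointwise continuous *)
  (forall (fn : nat -> T -> R) (f : T -> R),
      (forall n, Linf (fn n)) -> Linf f ->
      (exists M : R, forall n w, `|fn n w| <= M) ->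
      (forall w, (fun n => fn n w) @ \oo --> f w) ->
      (fun n => Tu P u (fn n)) @ \oo --> Tu P u f) /\
  (* representation *)
  (forall f A, Linf f -> measurable A -> V A f = Tu P u (fun w => f w * \1_A w)).
Proof. by apply: main_sec. Qed.
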